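(* Let $m\geq 2$ and let $\mathbf d=(d_1,d_2)$ be a nonzero pair of non-negative integers with $\langle\mathbf d,\mathbf d\rangle=d_1^2+d_2^2-md_1d_2\leq 0$ (so $d_1,d_2\geq1$). For $x\in[0,d_1]$ define $$c_{\mathbf d}(x)=\Bigl(mx+d_2-\sqrt{(mx-d_2)^2+4x(d_1-x)}\Bigr)/2.$$ Then for all $x\in[0,d_1]$ we have $\frac{d_2}{d_1}\,x\leq c_{\mathbf d}(x)\leq\min(mx,d_2)$.
   Context: The Euler form of $K(m)$ (two vertices, $m$ arrows from vertex $1$ to vertex $2$) is extended to $\mathbb R^2$ by $\langle(a_1,a_2),(b_1,b_2)\rangle=a_1b_1+a_2b_2-ma_1b_2$. For fixed $x\in[0,d_1]$, $c_{\mathbf d}(x)$ is the smaller of the two zeroes of the quadratic function $y\mapsto\langle(x,y),(d_1-x,d_2-y)\rangle$. *)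

(* Defs.v *)
From Stdlib Require Import Reals Lra Lia.
Open Scope R_scope.

(* Euler form of the Kronecker quiver K(m), extended to R^2:
   <(a1,a2),(b1,b2)> = a1 b1 + a2 b2 - m a1 b2. *)
Definition euler_form (m : nat) (a1 a2 b1 b2 : R) : R :=
  a1 * b1 + a2 * b2 - INR m * a1 * b2.

Definition c_d (m d1 d2 : nat) (x : R) : R :=
  (INR m * x + INR d2
   - sqrt ((INR m * x - INR d2) ^ 2 + 4 * x * (INR d1 - x))) / 2.

(* Main.v *)
Require Import Defs.
From Stdlib Require Import Reals Lra Lia.
Open Scope R_scope.

Theorem lemma3p2 (m d1 d2 : nat) :
  (2 <= m)%nat ->
  (d1, d2) <> (0%nat, 0%nat) ->
  euler_form m (INR d1) (INR d2) (INR d1) (INR d2) <= 0 ->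
  forall x : R, 0 <= x <= INR d1 ->
    INR d2 / INR d1 * x <= c_d m d1 d2 x /\
    c_d m d1 d2 x <= Rmin (INR m * x) (INR d2).
Proof.
  intros Hm Hd He x Hx.
  unfold euler_form, c_d in *.
  assert (HM : 2 <= INR m) by (replace 2 with (INR 2) by (simpl; lra); apply le_INR; lia).
  pose proof (pos_INR d1) as Ha. pose proof (pos_INR d2) as Hb.
  set (a := INR d1) in *. set (b := INR d2) in *. set (M := INR m) in *.
  assert (Hapos : 0 < a).
  { destruct (Req_dec a 0) as [E|E]; [|lra].
    exfalso. apply Hd. assert (b = 0) by (rewrite E in He; nra).
    assert (d1 = 0%nat) by (apply INR_eq; simpl; exact E).
    assert (d2 = 0%nat) by (apply INR_eq; simpl; assumption).
    subst; reflexivity. }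
  assert (Hbpos : 0 < b) by (destruct (Req_dec b 0) as [E|E]; [rewrite E in He; nra | lra]).
  set (S := (M * x - b) ^ 2 + 4 * x * (a - x)).
  assert (HS1 : (M * x - b) ^ 2 <= S) by (unfold S; nra).
  assert (Habs : Rabs (M * x - b) <= sqrt S).
  { rewrite <- sqrt_Rsqr_abs. apply sqrt_le_1_alt. unfold Rsqr. lra. }
  pose proof (Rle_abs (M*x-b)). pose proof (Rle_abs (-(M*x-b))). rewrite Rabs_Ropp in *.
  split.
  - set (R := M * x + b - 2 * b * x / a).
    assert (HR : 0 <= R).
    { assert (a * R * b = M*x*a*b + a*b*b - 2*b*b*x) by (unfold R; field; lra).
      assert (0 <= x*(M*a*b - a*a - b*b)) by (apply Rmult_le_pos; lra). assert (0 <= b*b*(a-x)) by (apply Rmult_le_pos; nra). assert (0 <= a * R * b) by nra.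
      assert (0 <= a * R) by (apply (Rmult_le_reg_r b); lra).
      apply (Rmult_le_reg_l a); lra. }
    assert (HRS : S <= R ^ 2).
    { assert (EQ : a^2 * (R^2 - S) = 4*(a-x)*x*(M*a*b-b*b-a*a)) by (unfold R, S; field; lra).
      assert (0 <= a^2 * (R^2 - S)) by (rewrite EQ; assert (0 <= (a-x)*x) by (apply Rmult_le_pos; lra); assert (0 <= M*a*b-b*b-a*a) by lra; nra).
      assert (0 <= R^2 - S); [|lra].
      apply (Rmult_le_reg_l (a^2)); nra. }
    assert (HSR : sqrt S <= R).
    { rewrite <- (sqrt_pow2 R HR). apply sqrt_le_1_alt. lra. }
    unfold R in HSR.
    replace (b / a * x) with (2 * b * x / a / 2) by (field; lra). lra.
  - apply Rmin_glb; lra.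
Qed.
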